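(* For every two-point selection $f$ on $\mathbb{R}$ there is a two-point selection $g$ on $\mathbb{R}$ that has neither a $g$-minimum point nor a $g$-maximum point, such that $\mathcal{B}_f(\mathbb{R})=\mathcal{B}_g(\mathbb{R})$.
   Context: A two-point selection on $\mathbb{R}$ is a function $f$ from the set of two-element subsets of $\mathbb{R}$ to $\mathbb{R}$ with $f(F)\in F$. A point $x$ is an $f$-minimum if $f(\{x,y\})=x$ for all $y\neq x$, and an $f$-maximum if $f(\{x,y\})=y$ for all $y\ne x$. Write $r<_f s$ if $f(\{r,s\})=r$, $(\leftarrow,r)_f=\{x: x<_f r\}$, $(r,\rightarrow)_f=\{x: r<_f x\}$. The topology $\tau_f$ on $\mathbb{R}$ is generated (as a subbase) by all these sets, and $\mathcal{B}_f(\mathbb{R})$ is the $\sigma$-algebra generated by $\tau_f$. *)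

(* Defs.v *)
From HB Require Import structures.
From mathcomp Require Import all_boot all_order all_algebra.
From mathcomp Require Import all_classical all_reals.
From mathcomp Require Import measure.
From Stdlib Require Import Reals.
Set Implicit Arguments. Unset Strict Implicit. Unset Printing Implicit Defensive.
Local Open Scope classical_set_scope.

Definition twoset : Type :=
  {A : set R | exists x y : R, x <> y /\ A = [set x; y]}.

Definition pair2 (r s : R) (h : r <> s) : twoset :=
  exist _ [set r; s] (ex_intro _ r (ex_intro _ s (conj h erefl))).

Definition two_point_selection (f : twoset -> R) : Prop :=
  forall F : twoset, proj1_sig F (f F).

Definition sel_lt (f : twoset -> R) (r s : R) : Prop :=
  exists h : r <> s, f (pair2 h) = r.

Definition is_f_minimum (f : twoset -> R) (x : R) : Prop :=
  forall (y : R) (h : x <> y), f (pair2 h) = x.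

Definition is_f_maximum (f : twoset -> R) (x : R) : Prop :=
  forall (y : R) (h : x <> y), f (pair2 h) = y.

Definition left_ray (f : twoset -> R) (r : R) : set R := [set x | sel_lt f x r].
Definition right_ray (f : twoset -> R) (r : R) : set R := [set x | sel_lt f r x].

Definition sel_subbase (f : twoset -> R) : set (set R) :=
  [set A | exists r, A = left_ray f r \/ A = right_ray f r].

Definition is_topology (T : set (set R)) : Prop :=
  [/\ T setT,
      (forall A B, T A -> T B -> T (A `&` B)) &
      (forall F : set (set R), F `<=` T -> T (\bigcup_(A in F) A))].

Definition tau_sel (f : twoset -> R) : set (set R) :=
  smallest is_topology (sel_subbase f).

Definition borel_sel (f : twoset -> R) : set (set R) :=
  <<s tau_sel f >>.

(* Main.v *)
Require Import Defs.
From mathcomp Require Import all_classical.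
From Stdlib Require Import Reals.
From HB Require Import structures.
From mathcomp Require Import all_boot all_order all_algebra.
From mathcomp Require Import all_classical all_reals.
From mathcomp Require Import measure.
From Stdlib Require Import Lra.
Set Implicit Arguments. Unset Strict Implicit. Unset Printing Implicit Defensive.
Local Open Scope classical_set_scope.

Lemma twoset_eq (A B : set R) pA pB : A = B -> exist _ A pA = exist _ B pB :> twoset.
Proof. move=> E; subst B; congr exist; exact: Prop_irrelevance. Qed.

Lemma pair2_sym (x y : R) (h1 : x <> y) (h2 : y <> x) : pair2 h1 = pair2 h2.
Proof. apply: twoset_eq; exact: setUC. Qed.

Lemma pair_in (x y u v : R) : [set x; y] = [set u; v] ->
  (x = u \/ x = v) /\ (y = u \/ y = v).
Proof.
move=> E; split.
  by have := congr1 (fun A => A x) E => /= <-; left.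
by have := congr1 (fun A => A y) E => /= <-; right.
Qed.

Lemma tau_top f : is_topology (tau_sel f).
Proof.
rewrite /tau_sel /smallest; split.
- by move=> M /= [[]].
- move=> A B HA HB M /= [MT sub]; case: (MT) => T I U.
  by apply: I; [apply: (HA M (conj MT sub))|apply: (HB M (conj MT sub))].
- move=> F HF M /= [MT sub]; case: (MT) => T I U.
  by apply: U => A /HF HA; apply: (HA M (conj MT sub)).
Qed.

Lemma tau_sub f : sel_subbase f `<=` tau_sel f.
Proof. exact: sub_smallest. Qed.

Lemma tau_I f A B : tau_sel f A -> tau_sel f B -> tau_sel f (A `&` B).
Proof. by case: (tau_top f) => _ I _; apply: I. Qed.

Lemma tau_U f A B : tau_sel f A -> tau_sel f B -> tau_sel f (A `|` B).
Proof.
case: (tau_top f) => _ _ U HA HB.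
have -> : A `|` B = \bigcup_(X in [set A; B]) X.
  apply/seteqP; split => z /=.
    by case=> Hz; [exists A => //; left | exists B => //; right].
  by case=> X /= [->|->] Hz; [left|right].
by apply: U => X /= [->|->].
Qed.

Lemma tau_C1 f x : two_point_selection f -> tau_sel f (~` [set x]).
Proof.
move=> Hf.
have -> : ~` [set x] = left_ray f x `|` right_ray f x.
  apply/seteqP; split => y /=.
    move=> nyx; have h : x <> y by move=> e; apply: nyx.
    have := Hf (pair2 h); rewrite /= => -[e|e].
      by right; exists h.
    by left; exists nyx; rewrite (pair2_sym nyx h).
  by case=> -[h _] e; [apply: h | apply: h].
by apply: tau_U; apply: tau_sub; exists x; [left|right].
Qed.

Definition S3 (a b c : R) : set R := [set a; b; c].

Lemma tau_C3 f a b c : two_point_selection f -> tau_sel f (~` S3 a b c).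
Proof.
move=> Hf; rewrite /S3 !setCU.
by apply: tau_I; [apply: tau_I|]; apply: tau_C1.
Qed.

Definition agree (f g : twoset -> R) (a b c : R) :=
  forall x y (h : x <> y), ~ (S3 a b c x /\ S3 a b c y) -> f (pair2 h) = g (pair2 h).

Lemma agree_sym f g a b c : agree f g a b c -> agree g f a b c.
Proof. by move=> H x y h n; rewrite H. Qed.

Lemma tau_transfer f g a b c : two_point_selection g -> agree f g a b c ->
  forall U, tau_sel f U -> tau_sel g (U `&` ~` S3 a b c).
Proof.
move=> Hg Hag U HU; set C := ~` S3 a b c.
have HC : tau_sel g C by exact: tau_C3.
apply: (HU [set U | tau_sel g (U `&` C)]); split; first split.
- by rewrite /= setTI.
- move=> A B /= HA HB.
  have -> : A `&` B `&` C = (A `&` C) `&` (B `&` C).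
    by apply/seteqP; split => z /=; tauto.
  exact: tau_I.
- move=> F HF /=.
  have -> : (\bigcup_(A in F) A) `&` C = \bigcup_(X in [set A `&` C | A in F]) X.
    apply/seteqP; split => z /=.
      by case=> -[A FA Az] Cz; exists (A `&` C) => //; exists A.
    by case=> X [A FA <-] [Az Cz]; split => //; exists A.
  case: (tau_top g) => _ _ Un; apply: Un => X [A FA <-]; exact: HF.
- move=> A [r [->|->]] /=.
  + have -> : left_ray f r `&` C = left_ray g r `&` C.
      apply/seteqP; split => z /= [[h e] Cz]; split => //; exists h.
        by rewrite -(Hag z r h) // => -[Sz _]; apply: Cz.
      by rewrite (Hag z r h) // => -[Sz _]; apply: Cz.
    by apply: tau_I => //; apply: tau_sub; exists r; left.
  + have -> : right_ray f r `&` C = right_ray g r `&` C.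
      apply/seteqP; split => z /= [[h e] Cz]; split => //; exists h.
        by rewrite -(Hag r z h) // => -[_ Sz]; apply: Cz.
      by rewrite (Hag r z h) // => -[_ Sz]; apply: Cz.
    by apply: tau_I => //; apply: tau_sub; exists r; right.
Qed.

Lemma borel_U f A B : borel_sel f A -> borel_sel f B -> borel_sel f (A `|` B).
Proof.
move=> HA HB.
have -> : A `|` B = \bigcup_i (if i is 0%N then A else B).
  apply/seteqP; split => z /=.
    by case=> Hz; [exists 0%N | exists 1%N].
  by case=> -[|i] _ Hz; [left|right].
by apply: sigma_algebra_bigcup => -[|i].
Qed.

Lemma borel_1 f x : two_point_selection f -> borel_sel f [set x].
Proof.
move=> Hf; rewrite -(setCK [set x]) -setTD.
apply: sigma_algebraCD; apply: sub_sigma_algebra; exact: tau_C1.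
Qed.

Lemma borel_sub3 f a b c X : two_point_selection f -> X `<=` S3 a b c -> borel_sel f X.
Proof.
move=> Hf HX.
have part : forall u, borel_sel f (X `&` [set u]).
  move=> u; case: (pselect (X u)) => Xu.
    have -> : X `&` [set u] = [set u].
      by apply/seteqP; split => z /=; [case | move=> ->].
    exact: borel_1.
  have -> : X `&` [set u] = set0.
    by apply/seteqP; split => z //= [Xz ez]; apply: Xu; rewrite -ez.
  exact: sigma_algebra0.
have -> : X = (X `&` [set a]) `|` (X `&` [set b]) `|` (X `&` [set c]).
  apply/seteqP; split => z /=.
    by move=> Xz; have := HX z Xz; rewrite /S3 /=; tauto.
  tauto.
apply: borel_U; last exact: part.
by apply: borel_U; exact: part.
Qed.

Lemma borel_transfer f g a b c : two_point_selection g -> agree f g a b c ->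
  borel_sel f `<=` borel_sel g.
Proof.
move=> Hg Hag; apply: smallest_sub; first exact: smallest_sigma_algebra.
move=> U HU.
have -> : U = (U `&` ~` S3 a b c) `|` (U `&` S3 a b c).
  by apply/seteqP; split => z /=; [case: (pselect (S3 a b c z)); tauto | tauto].
apply: borel_U.
  by apply: sub_sigma_algebra; exact: (tau_transfer Hg Hag).
by apply: (@borel_sub3 g a b c) => // z [_ Sz].
Qed.

Ltac ps e := match goal with |- context [pselect ?P] =>
  destruct (pselect P) as [e|e]; simpl end.

Definition gdef (f : twoset -> R) (a b c : R) (F : twoset) : R :=
  if pselect (proj1_sig F = [set a; b]) then a
  else if pselect (proj1_sig F = [set b; c]) then b
  else if pselect (proj1_sig F = [set c; a]) then c
  else f F.

Lemma gdef_sel f a b c : two_point_selection f -> two_point_selection (gdef f a b c).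
Proof.
move=> Hf F; rewrite /gdef.
destruct (pselect (proj1_sig F = [set a; b])) as [e|n] => /=; first by rewrite e; left.
destruct (pselect (proj1_sig F = [set b; c])) as [e|n2] => /=; first by rewrite e; left.
destruct (pselect (proj1_sig F = [set c; a])) as [e|n3] => /=; first by rewrite e; left.
exact: Hf.
Qed.

Lemma gdef_agree f a b c : agree f (gdef f a b c) a b c.
Proof.
move=> x y h nS; rewrite /gdef /=.
ps e1.
  by exfalso; apply: nS; have := pair_in e1; rewrite /S3 /=; tauto.
ps e2.
  by exfalso; apply: nS; have := pair_in e2; rewrite /S3 /=; tauto.
ps e3 => //.
by exfalso; apply: nS; have := pair_in e3; rewrite /S3 /=; tauto.
Qed.

Section gvals.
Variables (f : twoset -> R) (a b c : R).
Hypotheses (ab : a <> b) (bc : b <> c) (ca : c <> a).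

Lemma g_ab x y (h : x <> y) : [set x; y] = [set a; b] -> gdef f a b c (pair2 h) = a.
Proof. move=> e; rewrite /gdef /= e; ps e3; [done | by case: e3]. Qed.

Lemma g_bc x y (h : x <> y) : [set x; y] = [set b; c] -> gdef f a b c (pair2 h) = b.
Proof.
move=> e; rewrite /gdef /= e.
ps e2; first by exfalso; have := pair_in e2; have := nesym ab; have := nesym bc; have := nesym ca; tauto.
ps e3; [done | by case: e3].
Qed.

Lemma g_ca x y (h : x <> y) : [set x; y] = [set c; a] -> gdef f a b c (pair2 h) = c.
Proof.
move=> e; rewrite /gdef /= e.
ps e2; first by exfalso; have := pair_in e2; have := nesym ab; have := nesym bc; have := nesym ca; tauto.
ps e4; first by exfalso; have := pair_in e4; have := nesym ab; have := nesym bc; have := nesym ca; tauto.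
ps e3; [done | by case: e3].
Qed.
End gvals.

Lemma min_unique f p x : is_f_minimum f p -> is_f_minimum f x -> x = p.
Proof.
move=> Hp Hx; case: (pselect (x = p)) => // n.
have h : p <> x by move=> e; apply: n.
by have := Hp x h; have := Hx p n; rewrite (pair2_sym n h) => ->.
Qed.

Lemma max_unique f p x : is_f_maximum f p -> is_f_maximum f x -> x = p.
Proof.
move=> Hp Hx; case: (pselect (x = p)) => // n.
have h : p <> x by move=> e; apply: n.
by have := Hp x h; have := Hx p n; rewrite (pair2_sym n h) => ->.
Qed.

Lemma min_not_max f p : is_f_minimum f p -> is_f_maximum f p -> False.
Proof.
move=> Hp Hq.
have h : p <> Rplus p R1 by move=> e; lra.
have := Hp _ h; rewrite Hq => e; lra.
Qed.

Lemma triple f : exists a b c, a <> b /\ b <> c /\ c <> a /\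
  (forall x, is_f_minimum f x -> S3 a b c x) /\
  (forall x, is_f_maximum f x -> S3 a b c x).
Proof.
case: (pselect (exists p, is_f_minimum f p)) => [[p Hp]|np];
case: (pselect (exists q, is_f_maximum f q)) => [[q Hq]|nq].
- have pq : p <> q by move=> e; subst q; exact: (min_not_max Hp Hq).
  have hp := Rle_abs p; have hq := Rle_abs q; have hp0 := Rabs_pos p; have hq0 := Rabs_pos q.
  exists p, q, (Rplus (Rplus (Rabs p) (Rabs q)) R1).
  split => //; split; first by move=> e; lra.
  split; first by move=> e; lra.
  split => x Hx.
    by rewrite /S3 /=; left; left; exact: min_unique Hp Hx.
  by rewrite /S3 /=; left; right; exact: max_unique Hq Hx.
- exists p, (Rplus p R1), (Rplus p (Rplus R1 R1)).
  split; first by move=> e; lra.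
  split; first by move=> e; lra.
  split; first by move=> e; lra.
  split => x Hx.
    by rewrite /S3 /=; left; left; exact: min_unique Hp Hx.
  by exfalso; apply: nq; exists x.
- exists q, (Rplus q R1), (Rplus q (Rplus R1 R1)).
  split; first by move=> e; lra.
  split; first by move=> e; lra.
  split; first by move=> e; lra.
  split => x Hx.
    by exfalso; apply: np; exists x.
  by rewrite /S3 /=; left; left; exact: max_unique Hq Hx.
- exists R0, R1, (Rplus R1 R1).
  split; first by move=> e; lra.
  split; first by move=> e; lra.
  split; first by move=> e; lra.
  split => x Hx.
    by exfalso; apply: np; exists x.
  by exfalso; apply: nq; exists x.
Qed.

Theorem lemma2p2 (f : twoset -> R) :
  two_point_selection f ->
  exists g : twoset -> R,
    two_point_selection g /\
    (forall x : R, ~ is_f_minimum g x) /\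
    (forall x : R, ~ is_f_maximum g x) /\
    borel_sel f = borel_sel g.
Proof.
move=> Hf.
have [a [b [c [ab [bc [ca [Hmin Hmax]]]]]]] := triple f.
exists (gdef f a b c).
have Hg := @gdef_sel f a b c Hf.
have Hag := @gdef_agree f a b c.
split => //; split; [|split].
- move=> x Hx; case: (pselect (S3 a b c x)) => Sx.
    rewrite /S3 /= in Sx; case: Sx => [[ex|ex]|ex]; subst x.
    + have := Hx c (nesym ca).
      by rewrite (@g_ca f a b c ab bc ca a c (nesym ca) (setUC _ _)).
    + have := Hx a (nesym ab).
      by rewrite (@g_ab f a b c b a (nesym ab) (setUC _ _)) => e; apply: ab.
    + have := Hx b (nesym bc).
      by rewrite (@g_bc f a b c ab bc ca c b (nesym bc) (setUC _ _)) => e; apply: bc.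
  apply: (Sx); apply: Hmin => y h; rewrite Hag; first exact: Hx.
  by case=> Sx2 _; apply: Sx.
- move=> x Hx; case: (pselect (S3 a b c x)) => Sx.
    rewrite /S3 /= in Sx; case: Sx => [[ex|ex]|ex]; subst x.
    + have := Hx b ab.
      by rewrite (@g_ab f a b c a b ab erefl).
    + have := Hx c bc.
      by rewrite (@g_bc f a b c ab bc ca b c bc erefl).
    + have := Hx a ca.
      by rewrite (@g_ca f a b c ab bc ca c a ca erefl).
  apply: (Sx); apply: Hmax => y h; rewrite Hag; first exact: Hx.
  by case=> Sx2 _; apply: Sx.
- apply/seteqP; split.
    exact: borel_transfer Hg Hag.
  exact: borel_transfer Hf (agree_sym Hag).
Qed.
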